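(* Let $F\ge1$ and $n_1,\dots,n_F$ be positive integers with $n_1\ge2$, not $(F,n_1)=(1,2)$, and let $p_a$, $r^{(k)}$, $r$ be as in the context. Label the vertices of a regular $r$-gon by $0,1,\dots,r-1$ (modulo $r$) clockwise, and assign to the vertex $t\,r^{(2)} \bmod r$ the time-ordered index $t\in\{0,\dots,r-1\}$. Then for every $a=1,\dots,F$: if the vertex $k$ has time-ordered index $t$, then the vertex $k+r^{(a+1)}$ (mod $r$) has time-ordered index $t+(-1)^{a-1}p_a$ (mod $r$).
   Context: For $1\le k\le a\le F$, let $p^{(k)}_a/q^{(k)}_a$ (coprime positive integers) equal the continued fraction $[n_a,\dots,n_k]:=1/(n_a+1/(n_{a-1}+\cdots+1/n_k))$, $[n_k]=1/n_k$; write $p_a=p^{(1)}_a$. Set $r^{(k)}=p^{(k)}_F+q^{(k)}_F$ for $1\le k\le F$, $r^{(F+1)}=r^{(F+2)}=1$, $r=r^{(1)}$. The integers $r$ and $r^{(2)}$ are coprime, so the time-ordered index is a well-defined bijection between vertices and $\mathbb{Z}/r\mathbb{Z}$. *)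

(* Defs.v *)
From HB Require Import structures.
From mathcomp Require Import all_boot all_order all_algebra.
Set Implicit Arguments. Unset Strict Implicit. Unset Printing Implicit Defensive.
Import Order.TTheory GRing.Theory Num.Theory.
Local Open Scope ring_scope.

(* The sequence n_1, n_2, ... is a function n : nat -> nat (only n 1 .. n F matter). *)

(* cf_aux n k d = [n_{k+d}, ..., n_k] as a rational number, where
   [n_k] = 1/n_k and [n_a,...,n_k] = 1/(n_a + [n_{a-1},...,n_k]). *)
Fixpoint cf_aux (n : nat -> nat) (k d : nat) : rat :=
  match d with
  | O => ((n k)%:R)^-1
  | d'.+1 => ((n (k + d)%N)%:R + cf_aux n k d')^-1
  end.

Definition cf (n : nat -> nat) (k a : nat) : rat := cf_aux n k (a - k).

Definition pk (n : nat -> nat) (k a : nat) : int := numq (cf n k a).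
Definition qk (n : nat -> nat) (k a : nat) : int := denq (cf n k a).

Definition p (n : nat -> nat) (a : nat) : int := pk n 1 a.

Definition rk (n : nat -> nat) (F k : nat) : int :=
  if (k <= F)%N then pk n k F + qk n k F else 1.

Definition r (n : nat -> nat) (F : nat) : int := rk n F 1.

Definition vertex_of_index (n : nat -> nat) (F : nat) (t : int) : int :=
  ((t * rk n F 2) %% r n F)%Z.

Definition has_index (n : nat -> nat) (F : nat) (v t : int) : Prop :=
  v = vertex_of_index n F t.

(* Main.v *)
Require Import Defs.
From mathcomp Require Import all_boot all_order all_algebra.
From mathcomp Require Import ring lra zify.
Import Order.TTheory GRing.Theory Num.Theory.
Local Open Scope ring_scope.

Fixpoint E (f : nat -> int) (i l : nat) : int :=
  match l with
  | 0 => 0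
  | l1.+1 => match l1 with
             | 0 => 1
             | l'.+1 => f (i + l')%N * E f i l1 + E f i l'
             end
  end.

Lemma ES f i l : E f i l.+2 = f (i + l)%N * E f i l.+1 + E f i l.
Proof. by []. Qed.

Lemma E_split f i J L :
  E f i (J + L + 1) = E f i (J + 1) * E f (i + J) (L + 1) + E f i J * E f (i + J + 1) L.
Proof.
suff H : (E f i (J + L + 1) = E f i (J + 1) * E f (i + J) (L + 1) + E f i J * E f (i + J + 1) L)
  /\ (E f i (J + L.+1 + 1) = E f i (J + 1) * E f (i + J) (L.+1 + 1) + E f i J * E f (i + J + 1) L.+1)
  by case: H.
elim: L => [|L [IH1 IH2]].
  split; first by rewrite !addn0 addn1 /= mulr1 mulr0 addr0.
  rewrite addn1 [E f (i+J) 2]/= [E f (i+J+1) 1]/= addn0 mulr1 addr0 mulr1.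
  by rewrite addn1 ES mulrC.
split=> //.
have -> : (J + L.+2 + 1 = (J + L + 1).+2)%N by lia.
rewrite ES IH1.
have -> : ((J + L + 1).+1 = J + L.+1 + 1)%N by lia.
rewrite IH2.
have -> : (L.+2 + 1 = (L + 1).+2)%N by lia.
rewrite ES.
have -> : ((L + 1).+1 = L.+1 + 1)%N by lia.
rewrite [E f (i + J + 1) L.+2]ES.
have -> : (i + (J + L + 1) = i + J + (L + 1))%N by lia.
have -> : (i + J + 1 + L = i + J + (L + 1))%N by lia.
ring.
Qed.

Lemma E_det f i L :
  E f i L.+2 * E f i.+1 L - E f i L.+1 * E f i.+1 L.+1 = - (-1) ^+ L.
Proof.
elim: L => [|L IH]; first by rewrite /= mulr0 mulr1 expr0 sub0r.
rewrite ES [E f i.+1 L.+2]ES.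
have -> : (i.+1 + L = i + L.+1)%N by lia.
rewrite exprS.
have -> : - (-1 * (-1) ^+ L) = - (- (-1) ^+ L) :> int by ring.
rewrite -IH; ring.
Qed.

Lemma E_pos f i l : (forall j, 0 <= f j) -> 0 < f i -> 0 < E f i l.+1.
Proof.
move=> f0 fi.
suff : 0 < E f i l.+1 /\ 0 < E f i l.+2 by case.
elim: l => [|l [IH1 IH2]]; first by split=> //=; rewrite addn0 mulr1 addr0.
split=> //; rewrite ES.
have := f0 (i + l.+1)%N; nra.
Qed.

Lemma E_agree f g i l :
  (forall j, (j.+1 < i + l)%N -> f j = g j) -> E f i l = E g i l.
Proof.
move=> H.
suff : forall l', (l'.+1 <= l)%N -> E f i l' = E g i l' /\ E f i l'.+1 = E g i l'.+1.
  by case: l H => [|l0] H // /(_ l0 (leqnn _)); case.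
elim=> [|l' IH] hl; first by [].
have [IH1 IH2] := IH (ltnW hl).
split=> //.
rewrite !ES IH1 IH2 H //; lia.
Qed.

Definition fz (n : nat -> nat) : nat -> int := fun j => (n j)%:Z.

Lemma intr_natz (m : nat) : ((m%:Z)%:~R : rat) = m%:R.
Proof. by []. Qed.

Lemma cf_auxE n k d : (0 < n k)%N ->
  cf_aux n k d = (E (fz n) k d.+1)%:~R / (E (fz n) k d.+2)%:~R.
Proof.
move=> nk.
have f0 : forall j, 0 <= fz n j by [].
have fk : 0 < fz n k by rewrite /fz ltz_nat.
elim: d => [|d IH].
  by rewrite /= addn0 mulr1 addr0 div1r.
change (cf_aux n k d.+1) with (((n (k + d.+1)%N)%:R + cf_aux n k d)^-1); rewrite IH.
have h1 := @E_pos _ k d f0 fk.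
have h2 := @E_pos _ k d.+1 f0 fk.
have -> : E (fz n) k d.+3 = (n (k + d.+1)%N)%:Z * E (fz n) k d.+2 + E (fz n) k d.+1 by [].
move: h1 h2; generalize (E (fz n) k d.+1) (E (fz n) k d.+2) => a b h1 h2.
have q1 : 0 < b%:~R :> rat by rewrite ltr0z.
have q0 : 0 < a%:~R :> rat by rewrite ltr0z.
have q2 : (n (k + d.+1)%N)%:R * b%:~R + a%:~R != 0 :> rat.
  rewrite lt0r_neq0 //; apply: ltr_wpDl => //; apply: mulr_ge0 => //; by apply: ltW.
rewrite rmorphD rmorphM /= intr_natz.
field.
by rewrite q2 lt0r_neq0.
Qed.

Lemma sign_sq L : (-1) ^+ L * (-1) ^+ L = 1 :> int.
Proof. by rewrite -exprD -signr_odd oddD addbb. Qed.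

Lemma pkqkE n k F : (0 < n k)%N ->
  pk n k F = E (fz n) k (F - k).+1 /\ qk n k F = E (fz n) k (F - k).+2.
Proof.
move=> nk.
have f0 : forall j, 0 <= fz n j by [].
have fk : 0 < fz n k by rewrite /fz ltz_nat.
set L := (F - k)%N.
have h2 := @E_pos _ k L.+1 f0 fk.
have cop : coprime `|E (fz n) k L.+1| `|E (fz n) k L.+2|.
  have key : forall A B C D : int, A * D - B * C = - (-1) ^+ L ->
     ((-1) ^+ L * C) * B + (- ((-1) ^+ L * D)) * A = 1.
    move=> A B C D h.
    have -> : (-1) ^+ L * C * B + - ((-1) ^+ L * D) * A = - (-1) ^+ L * (A * D - B * C) by ring.
    by rewrite h mulrNN sign_sq.
  apply/coprimezP; exists ((-1) ^+ L * E (fz n) k.+1 L.+1, - ((-1) ^+ L * E (fz n) k.+1 L)).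
  exact: key (E_det (fz n) k L).
rewrite /pk /qk /cf cf_auxE //; split.
  by rewrite coprimeq_num // gtr0_sg // mul1r.
by rewrite coprimeq_den // gt_eqF // gtr0_norm.
Qed.

Definition gz (n : nat -> nat) (F : nat) : nat -> int :=
  fun j => if j == F then (n j)%:Z + 1 else (n j)%:Z.

Lemma rkE n F k : (forall i, (1 <= i <= F)%N -> (0 < n i)%N) -> (1 <= k <= F.+1)%N ->
  rk n F k = E (gz n F) k (F.+2 - k).
Proof.
move=> npos /andP[k1 kF].
rewrite /rk; case: leqP => hk; last first.
  have -> : k = F.+1 by apply/eqP; rewrite eqn_leq kF.
  by rewrite subSn // subnn.
have nk : (0 < n k)%N by apply: npos; rewrite k1.
have [-> ->] := pkqkE n k F nk.
have -> : (F.+2 - k = (F - k).+2)%N by lia.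
rewrite [E (gz n F) k _]ES.
rewrite (@E_agree (gz n F) (fz n) k (F - k).+1); last first.
  move=> j hj; rewrite /gz ifF //; apply/negbTE; apply/eqP; lia.
rewrite (@E_agree (gz n F) (fz n) k (F - k)); last first.
  move=> j hj; rewrite /gz ifF //; apply/negbTE; apply/eqP; lia.
have -> : (k + (F - k) = F)%N by lia.
rewrite /gz eqxx [E (fz n) k (F - k).+2]ES.
have -> : (k + (F - k) = F)%N by lia.
rewrite /fz; ring.
Qed.

Lemma pE n F a : (0 < n 1%N)%N -> (1 <= a <= F)%N -> p n a = E (gz n F) 1 a.
Proof.
move=> n1 /andP[a1 aF].
rewrite /p; have [-> _] := pkqkE n 1 a n1.
rewrite (@E_agree (gz n F) (fz n) 1 a); last first.
  move=> j hj; rewrite /gz ifF //; apply/negbTE; apply/eqP; lia.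
by congr E; lia.
Qed.

Theorem proposition5p29 (F : nat) (n : nat -> nat) :
  (1 <= F)%N ->
  (forall i, (1 <= i <= F)%N -> (0 < n i)%N) ->
  (2 <= n 1%N)%N ->
  ~ (F = 1%N /\ n 1%N = 2%N) ->
  forall a : nat, (1 <= a <= F)%N ->
  forall (k t : int), 0 <= k < r n F -> 0 <= t < r n F ->
    has_index n F k t ->
    has_index n F (((k + rk n F a.+1) %% r n F)%Z)
                  (((t + (-1) ^+ (a.-1) * p n a) %% r n F)%Z).
Proof.
move=> hF npos n1 _ a ha k t _ _ Hk.
have n1' : (0 < n 1%N)%N by apply: npos; rewrite leqnn hF.
have eR := rkE n F a.+1 npos ltac:(lia).
have er := rkE n F 1 npos ltac:(lia).
have er2 := rkE n F 2 npos ltac:(lia).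
have ep := pE n F a n1' ha.
move: Hk; rewrite /has_index /vertex_of_index /r.
case: a ha eR ep => [|b] ha eR ep; first by lia.
have [L eF] : exists L, F = (b.+1 + L)%N by exists (F - b.+1)%N; lia.
set g := gz n F in eR er er2 ep.
have e1 : E g 1 F.+1 = E g 1 b.+2 * E g b.+2 L.+1 + E g 1 b.+1 * E g b.+3 L.
  have := E_split g 1 b.+1 L.
  have -> : (b.+1 + L + 1 = F.+1)%N by lia.
  by rewrite !addn1 !add1n.
have e2 : E g 2 F = E g 2 b.+1 * E g b.+2 L.+1 + E g 2 b * E g b.+3 L.
  have := E_split g 2 b L.
  have -> : (b + L + 1 = F)%N by lia.
  by rewrite !addn1 !addSn !add0n.
have ed := E_det g 1 b.
have eR' : E g b.+2 (F.+2 - b.+2) = E g b.+2 L.+1 by congr E; lia.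
have er' : E g 1 (F.+2 - 1) = E g 1 F.+1 by congr E; lia.
have er2' : E g 2 (F.+2 - 2) = E g 2 F by congr E; lia.
rewrite eR' in eR; rewrite er' in er; rewrite er2' in er2.
rewrite /= eR er er2 ep => ->.
set s := (-1) ^+ b.
have hs : s * s = 1 by rewrite /s sign_sq.
set c := - s * E g 2 b.
have key : E g b.+2 L.+1 = s * E g 1 b.+1 * E g 2 F + c * E g 1 F.+1.
  rewrite e1 e2 /c.
  move: ed hs; rewrite -/s.
  generalize (E g b.+2 L.+1) (E g b.+3 L) (E g 1 b.+2) (E g 1 b.+1) (E g 2 b.+1) (E g 2 b).
  move=> X Y A1 A0 C1 C0 ed hs.
  have -> : s * A0 * (C1 * X + C0 * Y) + - s * C0 * (A1 * X + A0 * Y)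
     = - s * X * (A1 * C0 - A0 * C1) by ring.
  rewrite ed.
  have -> : - s * X * - s = X * (s * s) by ring.
  by rewrite hs mulr1.
rewrite modzDml modzMml key.
set r0 := E g 1 F.+1.
have -> : t * E g 2 F + (s * E g 1 b.+1 * E g 2 F + c * r0)
   = c * r0 + (t + s * E g 1 b.+1) * E g 2 F by ring.
by rewrite modzMDl.
Qed.
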